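(* Let $n\geq2$, $0\leq\lambda\leq n-1$, $\mu>0$, $\alpha=1-\frac{\lambda}{n-1}$, and for $0<r<1$ set $$\varphi(r)=\begin{cases}\exp\bigl(-(n+1)\mu\log^\alpha(\tfrac1r)\bigr), &\alpha>0,\\ 2^{-n}\mu^n\log^{-n(1+\mu)}(\tfrac1r), &\alpha=0,\end{cases}\qquad \psi(r)=\begin{cases}\exp\bigl(-\mu\log^\alpha(\tfrac1r)\bigr), &\alpha>0,\\ \log^{-\mu}(\tfrac1r), &\alpha=0.\end{cases}$$ Then there exists $R_0=R_0(\alpha,\mu)>0$ such that $\psi(2r)-\psi(r)\geq(\varphi(r))^{1/n}$ for all $0<r<R_0$. *)

(* Defs.v *)
From Stdlib Require Import Reals Lra Lia.
Open Scope R_scope.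

Definition alpha5 (n : nat) (lam : R) : R := 1 - lam / (INR n - 1).

Definition logpow (a r : R) : R := Rpower (ln (/ r)) a.

(* phi(r) from the paper; the branch alpha = 0 is the "else" case
   (alpha in [0,1] under the hypotheses). *)
Definition phi5 (n : nat) (a mu r : R) : R :=
  if Rlt_dec 0 a then exp (- (INR n + 1) * mu * logpow a r)
  else (/ 2) ^ n * mu ^ n * Rpower (ln (/ r)) (- (INR n) * (1 + mu)).

Definition psi5 (a mu r : R) : R :=
  if Rlt_dec 0 a then exp (- mu * logpow a r)
  else Rpower (ln (/ r)) (- mu).

(* Main.v *)
Require Import Defs.
From Stdlib Require Import Reals Lra Lia.
Open Scope R_scope.

Lemma exp_le_exp (x y : R) : x <= y -> exp x <= exp y.
Proof. intros [H|H]. left; apply exp_increasing; auto. subst; lra. Qed.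

Lemma ln_le1 (y : R) : 0 < y -> ln y <= y - 1.
Proof. intros Hy. pose proof (exp_ineq1_le (ln y)). rewrite exp_ln in H; lra. Qed.

Lemma ln2_lt1 : ln 2 < 1.
Proof.
  pose proof (exp_ineq1 1). assert (1+1 < exp 1) by (apply H; lra).
  rewrite <- (ln_exp 1). apply ln_increasing; lra.
Qed.

Lemma ln_shift (L : R) : 1 < L -> ln (L - ln 2) <= ln L - ln 2 / L.
Proof.
  intros HL. pose proof ln2_lt1. pose proof ln_lt_2.
  assert (HLc : 0 < L - ln 2) by lra.
  assert (E : L - ln 2 = L * ((L - ln 2) / L)) by (field; lra).
  rewrite E, ln_mult; try lra.
  - pose proof (ln_le1 ((L - ln 2)/L)).
    assert ((L - ln 2) / L - 1 = - (ln 2 / L)) by (field; lra).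
    assert (0 < (L - ln 2)/L) by (apply Rdiv_lt_0_compat; lra). lra.
  - apply Rdiv_lt_0_compat; lra.
Qed.

Lemma exp_neg_le (y : R) : 0 <= y -> exp (- y) <= / (1 + y).
Proof.
  intros Hy. rewrite exp_Ropp. apply Rinv_le_contravar. lra. apply exp_ineq1_le.
Qed.

Lemma else_branch (n : nat) (mu L : R) : (1 <= n)%nat -> 0 < mu -> 1 < L ->
  Rpower (L - ln 2) (- mu) - Rpower L (- mu) >=
  Rpower ((/ 2) ^ n * mu ^ n * Rpower L (- INR n * (1 + mu))) (/ INR n).
Proof.
  intros Hn Hmu HL. pose proof ln2_lt1. pose proof ln_lt_2.
  assert (Hnr : 0 < INR n) by (apply lt_0_INR; lia).
  set (P := Rpower L (- mu)).
  assert (HP : 0 < P) by (unfold P, Rpower; apply exp_pos).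
  assert (RHS : Rpower ((/ 2) ^ n * mu ^ n * Rpower L (- INR n * (1 + mu))) (/ INR n)
                = mu / 2 * P / L).
  { rewrite <- Rpow_mult_distr. rewrite <- Rpower_pow by lra.
    rewrite <- Rpower_mult_distr by (unfold Rpower; apply exp_pos).
    rewrite !Rpower_mult.
    replace (INR n * / INR n) with 1 by (field; lra).
    rewrite Rpower_1 by lra.
    replace (- INR n * (1 + mu) * / INR n) with (- mu + - 1) by (field; lra).
    rewrite Rpower_plus. fold P.
    unfold Rpower. replace (-1 * ln L) with (- ln L) by ring.
    rewrite exp_Ropp, exp_ln by lra. field. lra. }
  rewrite RHS.
  assert (H1 : Rpower (L - ln 2) (- mu) >= P * (1 + mu * (ln 2 / L))).
  { unfold P, Rpower.
    pose proof (ln_shift L HL).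
    assert (- mu * ln (L - ln 2) >= - mu * ln L + mu * (ln 2 / L)) by nra.
    apply Rle_ge. apply Rle_trans with (exp (- mu * ln L + mu * (ln 2 / L))).
    - rewrite exp_plus. apply Rmult_le_compat_l. left; apply exp_pos. apply exp_ineq1_le.
    - apply exp_le_exp. lra. }
  assert (mu * (ln 2 / L) >= mu / 2 / L).
  { unfold Rdiv. apply Rle_ge. rewrite Rmult_assoc. apply Rmult_le_compat_l. lra.
    apply Rmult_le_compat_r. left; apply Rinv_0_lt_compat; lra. lra. }
  assert (P * (mu * (ln 2 / L)) >= P * (mu / 2 / L)) by (apply Rle_ge, Rmult_le_compat_l; lra).
  assert (mu / 2 * P / L = P * (mu / 2 / L)) by (field; lra).
  lra.
Qed.


Lemma pos_branch (n : nat) (a mu L U : R) : (1 <= n)%nat -> 0 < mu -> 0 < a -> a <= 1 ->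
  U = 1 + (1 + Rabs (ln (2 / (mu * a * ln 2)))) / (mu * a ^ 2 / (4 * INR n)) ->
  U <= ln L -> 0 < L ->
  exp (- mu * Rpower (L - ln 2) a) - exp (- mu * Rpower L a) >=
  Rpower (exp (- (INR n + 1) * mu * Rpower L a)) (/ INR n).
Proof.
  intros Hn Hmu Ha Ha1 HU HuL HL0.
  pose proof ln2_lt1 as Hc1. pose proof ln_lt_2 as Hc2.
  assert (Hnr : 0 < INR n) by (apply lt_0_INR; lia).
  set (c := ln 2) in *.
  set (u := ln L) in *.
  set (K := 2 / (mu * a * c)) in *.
  set (a' := mu * a ^ 2 / (4 * INR n)) in *.
  assert (Ha' : 0 < a') by (unfold a'; apply Rdiv_lt_0_compat; [apply Rmult_lt_0_compat; [lra| apply pow_lt; lra] | lra]).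
  assert (HU1 : 1 <= U).
  { rewrite HU. assert (0 <= (1 + Rabs (ln K)) / a').
    { apply Rle_mult_inv_pos; [pose proof (Rabs_pos (ln K)); lra | lra]. } lra. }
  assert (Hu1 : 1 <= u) by lra.
  assert (HLe : L = exp u) by (unfold u; rewrite exp_ln; lra).
  assert (HL2 : 2 <= L) by (rewrite HLe; pose proof (exp_ineq1_le u); lra).
  set (t := Rpower L a).
  assert (Ht : t = exp (a * u)) by reflexivity.
  assert (Ht1 : 1 <= t).
  { rewrite Ht. pose proof (exp_ineq1_le (a*u)). nra. }
  set (t' := Rpower (L - c) a).
  set (y := a * c / L).
  assert (Hy0 : 0 < y) by (unfold y; apply Rdiv_lt_0_compat; [apply Rmult_lt_0_compat|]; lra).
  assert (Hy1 : y <= 1).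
  { unfold y. apply Rmult_le_reg_r with L. lra. unfold Rdiv. rewrite Rmult_assoc, Rinv_l by lra. nra. }
  assert (Ht' : t' <= t / (1 + y)).
  { unfold t'. unfold Rpower at 1.
    pose proof (ln_shift L ltac:(lra)). fold c u in H.
    apply Rle_trans with (exp (a * u + - y)).
    - apply exp_le_exp. unfold y. assert (a * c / L = a * (c / L)) by (field; lra). nra.
    - rewrite exp_plus. fold t. rewrite <- Ht. unfold Rdiv. apply Rmult_le_compat_l. lra.
      apply exp_neg_le. lra. }
  assert (Hd : t - t' >= y / 2).
  { assert (t - t / (1 + y) = t * y / (1 + y)) by (field; lra).
    assert (t * y / (1 + y) >= y / 2).
    { apply Rle_ge. apply Rmult_le_reg_r with (2 * (1 + y)). lra.
      replace (y / 2 * (2 * (1 + y))) with (y * (1 + y)) by (field; lra).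
      replace (t * y / (1 + y) * (2 * (1 + y))) with (2 * t * y) by (field; lra). nra. }
    lra. }
  assert (Hq : a' * u ^ 2 <= mu * t / INR n).
  { assert (t >= (a * u) ^ 2 / 4).
    { rewrite Ht. replace (a * u) with (a * u / 2 + a * u / 2) at 1 by field.
      rewrite exp_plus. pose proof (exp_ineq1_le (a * u / 2)).
      assert (0 <= a * u / 2) by nra. set (e := exp (a * u / 2)) in *.
      replace ((a * u) ^ 2 / 4) with ((a * u / 2) * (a * u / 2)) by field. apply Rle_ge, Rmult_le_compat; lra. }
    unfold a'. apply Rle_trans with (mu * ((a * u) ^ 2 / 4) / INR n).
    - right. field. lra.
    - unfold Rdiv. apply Rmult_le_compat_r. left; apply Rinv_0_lt_compat; lra.
      apply Rmult_le_compat_l; lra. }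
  assert (Hk : ln K + u <= mu * t / INR n).
  { assert (Hau : 1 + Rabs (ln K) <= a' * u).
    { assert (a' * (U - 1) = 1 + Rabs (ln K)) by (rewrite HU; field; lra). nra. }
    pose proof (Rle_abs (ln K)). pose proof (Rabs_pos (ln K)). nra. }
  assert (HK : 0 < K) by (unfold K; apply Rdiv_lt_0_compat; [lra| apply Rmult_lt_0_compat; [apply Rmult_lt_0_compat|]; lra]).
  assert (Hkey : exp (- (mu * t / INR n)) <= mu * y / 2).
  { rewrite exp_Ropp.
    assert (K * L <= exp (mu * t / INR n)).
    { rewrite HLe, <- (exp_ln K) at 1 by lra. rewrite <- exp_plus. apply exp_le_exp. lra. }
    apply Rle_trans with (/ (K * L)).
    - apply Rinv_le_contravar. apply Rmult_lt_0_compat; lra. lra.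
    - right. unfold K, y. field. repeat split; lra. }
  unfold Rpower. rewrite ln_exp.
  set (E := exp (- mu * t)).
  assert (HE : 0 < E) by apply exp_pos.
  assert (R1 : exp (/ INR n * (- (INR n + 1) * mu * t)) = E * exp (- (mu * t / INR n))).
  { unfold E. rewrite <- exp_plus. f_equal. field. lra. }
  assert (R2 : exp (- mu * t') >= E * (1 + mu * (t - t'))).
  { unfold E. apply Rle_ge.
    apply Rle_trans with (exp (- mu * t) * exp (mu * (t - t'))).
    - apply Rmult_le_compat_l. left; apply exp_pos. apply exp_ineq1_le.
    - rewrite <- exp_plus. right. f_equal. ring. }
  rewrite R1.
  assert (E * (mu * (t - t')) >= E * (mu * y / 2)).
  { apply Rle_ge, Rmult_le_compat_l. lra. nra. }
  assert (E * (mu * y / 2) >= E * exp (- (mu * t / INR n))).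
  { apply Rle_ge, Rmult_le_compat_l; lra. }
  nra.
Qed.

Lemma pick (M : R) : 0 < M -> exists R0, 0 < R0 /\ R0 <= / 2 /\
  forall r, 0 < r -> r < R0 -> M < ln (/ r).
Proof.
  intros HM. exists (Rmin (/ 2) (exp (- M))). split; [|split].
  - apply Rmin_pos; [lra | apply exp_pos].
  - apply Rmin_l.
  - intros r Hr HrR. rewrite ln_Rinv by lra.
    assert (r < exp (- M)) by (eapply Rlt_le_trans; [exact HrR | apply Rmin_r]).
    assert (ln r < ln (exp (- M))) by (apply ln_increasing; lra).
    rewrite ln_exp in H0. lra.
Qed.

Lemma ln_inv2 (r : R) : 0 < r -> ln (/ (2 * r)) = ln (/ r) - ln 2.
Proof.
  intros Hr. rewrite !ln_Rinv by lra. rewrite ln_mult by lra. ring.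
Qed.

Theorem lemma5p2 (n : nat) (lam mu : R)
  (hn : (2 <= n)%nat) (hlam0 : 0 <= lam) (hlam1 : lam <= INR n - 1)
  (hmu : 0 < mu) :
  exists R0 : R, 0 < R0 /\ R0 <= / 2 /\
    forall r : R, 0 < r -> r < R0 ->
      psi5 (alpha5 n lam) mu (2 * r) - psi5 (alpha5 n lam) mu r
      >= Rpower (phi5 n (alpha5 n lam) mu r) (/ INR n).
Proof.
  assert (Hn2 : 2 <= INR n) by (replace 2 with (INR 2) by (simpl; ring); apply le_INR; lia).
  unfold psi5, phi5, logpow.
  set (a := alpha5 n lam).
  assert (Ha1 : a <= 1).
  { unfold a, alpha5. assert (0 <= lam / (INR n - 1)) by (apply Rle_mult_inv_pos; lra). lra. }
  destruct (Rlt_dec 0 a) as [Ha|Ha].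
  - set (U := 1 + (1 + Rabs (ln (2 / (mu * a * ln 2)))) / (mu * a ^ 2 / (4 * INR n))).
    destruct (pick (exp U) (exp_pos U)) as [R0 [H1 [H2 H3]]].
    exists R0. split; [|split]; auto. intros r Hr HrR.
    specialize (H3 r Hr HrR).
    rewrite ln_inv2 by lra.
    apply (pos_branch n a mu (ln (/ r)) U); try lia; try lra; try reflexivity.
    + left. rewrite <- (ln_exp U). apply ln_increasing. apply exp_pos. exact H3.
    + pose proof (exp_pos U); lra.
  - destruct (pick 2 ltac:(lra)) as [R0 [H1 [H2 H3]]].
    exists R0. split; [|split]; auto. intros r Hr HrR.
    specialize (H3 r Hr HrR).
    rewrite ln_inv2 by lra.
    apply else_branch; try lia; lra.
Qed.
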